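(* If a non-empty graph $T$ is a $\mathsf{TJ}_n$-graph for infinitely many integers $n$, then there exists an integer $k$ such that $T$ is a maximum $\mathsf{TJ}_k$-graph.
   Context: Graphs are finite, simple, undirected; non-empty means having at least one vertex. $\mathsf{TJ}_k(G)$ is the graph on the cliques of $G$ of size $k$ where $C, C'$ are adjacent iff $|C \setminus C'| = |C' \setminus C| = 1$. $T$ is a $\mathsf{TJ}_k$-graph if $T \cong \mathsf{TJ}_k(G)$ for some graph $G$, and a maximum $\mathsf{TJ}_k$-graph if $T \cong \mathsf{TJ}_k(G)$ for some $G$ with $\omega(G) = k$ ($\omega$ = maximum clique size). *)

(* Defs.v *)
From mathcomp Require Import all_boot.
Set Implicit Arguments. Unset Strict Implicit. Unset Printing Implicit Defensive.

Definition simple_graph (V : finType) (e : rel V) : Prop :=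
  symmetric e /\ irreflexive e.

Definition clique (V : finType) (e : rel V) (C : {set V}) : bool :=
  [forall x in C, forall y in C, (x != y) ==> e x y].

Definition clique_number (V : finType) (e : rel V) : nat :=
  \max_(C : {set V} | clique e C) #|C|.

Definition tj_adj (V : finType) (C C' : {set V}) : bool :=
  (#|C :\: C'| == 1) && (#|C' :\: C| == 1).

Definition iso_TJ (k : nat) (VT : finType) (eT : rel VT)
    (V : finType) (e : rel V) : Prop :=
  exists f : VT -> {set V},
    injective f /\
    (forall C : {set V}, (clique e C && (#|C| == k)) <-> exists x, f x = C) /\
    (forall x y, eT x y = tj_adj (f x) (f y)).

Definition is_TJ_graph (k : nat) (VT : finType) (eT : rel VT) : Prop :=
  exists (V : finType) (e : rel V), simple_graph e /\ iso_TJ k eT e.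

Definition is_max_TJ_graph (k : nat) (VT : finType) (eT : rel VT) : Prop :=
  exists (V : finType) (e : rel V),
    simple_graph e /\ clique_number e = k /\ iso_TJ k eT e.

(* Main.v *)
Require Import Defs.
From mathcomp Require Import all_boot.
Set Implicit Arguments. Unset Strict Implicit.

Lemma clique_sub (V : finType) (e : rel V) (C D : {set V}) :
  clique e C -> D \subset C -> clique e D.
Proof.
move=> /forallP HC sDC; apply/forallP => x; apply/implyP => xD.
have /implyP := HC x; move/(_ (subsetP sDC x xD)) => /forallP Hx.
apply/forallP => y; apply/implyP => yD.
by have /implyP := Hx y; apply; apply: (subsetP sDC).
Qed.

Lemma no_big_clique (n : nat) (VT : finType) (eT : rel VT) (V : finType) (e : rel V) :
  iso_TJ n eT e -> #|VT| <= n ->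
  forall m (C : {set V}), clique e C -> #|C| = n.+1 + m -> False.
Proof.
move=> [f [finj [fim fadj]]] hN m; elim: m => [|m IH] C cC cardC.
- pose h := fun y : V => C :\ y.
  have hinj : {in C &, injective h}.
    move=> y z yC zC hyz; apply/eqP; apply: contraT => nyz.
    have : y \in C :\ z by rewrite !inE nyz yC.
    by rewrite -/(h z) -hyz /h !inE eqxx.
  have sub : h @: C \subset [set f x | x in VT].
    apply/subsetP => _ /imsetP [y yC ->].
    have hc : clique e (C :\ y) && (#|C :\ y| == n).
      rewrite (clique_sub cC (subD1set C y)) /=.
      by move: cardC; rewrite (cardsD1 y C) yC addn0 add1n => -[] ->.
    have [x fx] := (proj1 (fim _) hc).
    by apply/imsetP; exists x => //; rewrite fx.
  have := subset_leq_card sub; rewrite card_in_imset // cardC addn0.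
  move=> /leq_trans /(_ (leq_imset_card _ _)) H.
  by have := leq_trans H hN; rewrite ltnn.
- have : 0 < #|C| by rewrite cardC.
  rewrite card_gt0 => /set0Pn [y yC].
  apply: (IH (C :\ y)); first exact: (clique_sub cC (subD1set C y)).
  by move: cardC; rewrite (cardsD1 y C) yC addnS add1n => -[].
Qed.

Theorem proposition4p13 (VT : finType) (eT : rel VT) :
  simple_graph eT -> 0 < #|VT| ->
  (forall m : nat, exists n : nat, m <= n /\ is_TJ_graph n eT) ->
  exists k : nat, is_max_TJ_graph k eT.
Proof.
move=> _ hpos hinf.
have [n [hn [V [e [sg iso]]]]] := hinf #|VT|.
exists n, V, e; split => //; split => //.
apply/eqP; rewrite eqn_leq; apply/andP; split.
- apply/bigmax_leqP => C cC; rewrite leqNgt; apply/negP => hC.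
  apply: (no_big_clique iso hn (m := #|C| - n.+1) cC).
  by rewrite subnKC.
- case: iso => f [_ [fim _]].
  have /card_gt0P [x _] := hpos.
  have /andP [cf /eqP cardf] : clique e (f x) && (#|f x| == n).
    by apply (proj2 (fim (f x))); exists x.
  by rewrite -{1}cardf; apply: leq_bigmax_cond.
Qed.
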